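(* Let $n\in\mathbb N$, let $K_1,\dots,K_n$ be singular kernel functions and let $J$ be an arbitrary $n$-field function. Let $\mathbf y\in\overline S$ and let $j\in\{0,1,\dots,n\}$ be such that $m_j(\mathbf y)\ne-\infty$. Then there exist $\delta>0$ and a closed interval $W\subseteq[0,1]$ with the following properties for every $\mathbf x\in\overline S$ with $\|\mathbf x-\mathbf y\|\le\delta$: (i) $W\subseteq I_j(\mathbf x)$, and every point of $W$ has distance at least $\delta$ from the set $\{x_1,\dots,x_n\}$; (ii) $m_j(\mathbf x)=\sup_{t\in W}F(\mathbf x,t)$.
   Context: A kernel function is a function $K:(-1,0)\cup(0,1)\to\mathbb R$ that is concave on $(-1,0)$ and concave on $(0,1)$ and satisfies $\lim_{t\downarrow0}K(t)=\lim_{t\uparrow0}K(t)$. It is extended to $[-1,1]$ with values in $[-\infty,\infty)$ by its one-sided limits at $-1,0,1$. A kernel function is singular if $K(0)=-\infty$. An $n$-field function is a function $J:[0,1]\to[-\infty,\infty)$ that is bounded above and whose set of finite values has total weight strictly greater than $n$. Here the points $0$ and $1$ each have weight $1/2$ and every point of $(0,1)$ has weight $1$. $\overline S=\{\mathbf y\in\mathbb R^n:0\le y_1\le\dots\le y_n\le1\}$. $F(\mathbf y,t)=J(t)+\sum_{i=1}^nK_i(t-y_i)$, with the convention $a+(-\infty)=-\infty$. Set $y_0:=0$ and $y_{n+1}:=1$. For $j=0,\dots,n$ let $I_j(\mathbf y)=[y_j,y_{j+1}]$ and $m_j(\mathbf y)=\sup_{t\in I_j(\mathbf y)}F(\mathbf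 y,t)$. $\|\mathbf v\|=\max_i|v_i|$. *)

(* Defs.v *)
From HB Require Import structures.
From mathcomp Require Import all_boot all_order all_algebra.
From mathcomp Require Import all_classical all_reals all_analysis.
Set Implicit Arguments. Unset Strict Implicit. Unset Printing Implicit Defensive.
Import Order.TTheory GRing.Theory Num.Theory.
Import numFieldNormedType.Exports.
Local Open Scope classical_set_scope.
Local Open Scope ring_scope.

Section Defs.
Variable R : realType.

Definition concave_on (k : R -> R) (a b : R) : Prop :=
  forall x y l, a < x < b -> a < y < b -> 0 <= l <= 1 ->
    l * k x + (1 - l) * k y <= k (l * x + (1 - l) * y).

(* A kernel function, already extended to [-1,1] with values in [-oo,oo):
   K is real-valued (finite) on (-1,0) u (0,1), concave on each of these
   intervals, and its values at -1, 0, 1 are the one-sided limits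
   (the left and right limits at 0 both equal K 0).  Values outside
   [-1,1] are irrelevant. *)
Definition is_kernel (K : R -> \bar R) : Prop :=
  [/\ (forall t, (-1 < t < 0) \/ (0 < t < 1) -> K t \is a fin_num),
      concave_on (fun t => fine (K t)) (-1) 0 &
      concave_on (fun t => fine (K t)) 0 1] /\
  [/\ K x @[x --> (-1)^'+] --> K (-1),
      K x @[x --> 0^'-] --> K 0,
      K x @[x --> 0^'+] --> K 0 &
      K x @[x --> 1^'-] --> K 1].

Definition is_singular_kernel (K : R -> \bar R) : Prop :=
  is_kernel K /\ K 0 = -oo%E.

Definition weight (t : R) : R := if (t == 0) || (t == 1) then 2^-1 else 1.

(* n-field function J : [0,1] -> [-oo,oo), bounded above, whose set of
   finite values has total weight > n (i.e. some finite subset of it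
   already has weight > n; this covers the infinite case). *)
Definition is_field_function (n : nat) (J : R -> \bar R) : Prop :=
  (exists M : R, forall t, 0 <= t <= 1 -> (J t <= M%:E)%E) /\
  (exists s : seq R, [/\ uniq s,
      (forall t, t \in s -> 0 <= t <= 1 /\ J t \is a fin_num) &
      n%:R < \sum_(t <- s) weight t]).

Definition in_Sbar (n : nat) (y : 'I_n -> R) : Prop :=
  (forall i, 0 <= y i <= 1) /\ (forall i j : 'I_n, (i <= j)%N -> y i <= y j).

(* y_k with the conventions y_0 = 0, y_{n+1} = 1 (1-based indexing of y) *)
Definition yext (n : nat) (y : 'I_n -> R) (k : nat) : R :=
  match k with
  | 0 => 0
  | k'.+1 => match @insub nat (fun m => (m < n)%N) 'I_n k' with
             | Some i => y i
             | None => 1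
             end
  end.

Definition F_val (n : nat) (J : R -> \bar R) (K : 'I_n -> R -> \bar R)
  (y : 'I_n -> R) (t : R) : \bar R :=
  (J t + \sum_(i < n) K i (t - y i)%R)%E.

Definition Iint (n : nat) (y : 'I_n -> R) (j : nat) : set R :=
  [set t | yext y j <= t <= yext y j.+1].

Definition m_val (n : nat) (J : R -> \bar R) (K : 'I_n -> R -> \bar R)
  (y : 'I_n -> R) (j : nat) : \bar R :=
  ereal_sup (F_val J K y @` Iint y j).

End Defs.

(* Main.v *)
Require Import Defs.
From HB Require Import structures.
From mathcomp Require Import all_boot all_order all_algebra.
From mathcomp Require Import all_classical all_reals all_analysis.
From mathcomp Require Import ring lra.
Import Order.TTheory GRing.Theory Num.Theory.
Import numFieldNormedType.Exports.
Local Open Scope classical_set_scope.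
Local Open Scope ring_scope.

Section Aux.
Variable R : realType.

Lemma conc_mid (f : R -> R) a b al u be : concave_on f a b ->
  a < al -> al <= u -> u <= be -> be < b -> al < be ->
  (be - u) * f al + (u - al) * f be <= (be - al) * f u.
Proof.
move=> H aal alu ube beb albe.
have d0 : 0 < be - al by rewrite subr_gt0.
set l := (be - u) / (be - al).
have l0 : 0 <= l by rewrite /l; apply: divr_ge0; lra.
have l1 : l <= 1.
  rewrite /l ler_pdivrMr // mul1r; lra.
have e : l * al + (1 - l) * be = u by rewrite /l; field; lra.
have := H al be l; rewrite e => /(_ _ _ _) h.
have {}h : l * f al + (1 - l) * f be <= f u by apply: h; apply/andP; split; lra.
have -> : (be - u) * f al + (u - al) * f be = (be - al) * (l * f al + (1 - l) * f be).
  by rewrite /l; field; lra.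
by rewrite ler_pM2l.
Qed.

Lemma conc_ub (f : R -> R) a b : a < b -> concave_on f a b ->
  exists C, forall s, a < s < b -> f s <= C.
Proof.
move=> ab H.
set h := (b - a) / 5.
have h0 : 0 < h by rewrite /h divr_gt0 // subr_gt0.
have eD : b - a = 5 * h by rewrite /h; field.
clearbody h.
exists (5 * (`|f (a + h)| + `|f (a + 2 * h)| + `|f (a + 3 * h)| + `|f (a + 4 * h)|)) => s /andP[hsa hsb].
have n1 := ler_norm (f (a + h)). have n2 := ler_norm (f (a + 2 * h)).
have n3 := ler_norm (f (a + 3 * h)). have n4 := ler_norm (f (a + 4 * h)).
have m1 : - `|f (a + h)| <= f (a + h) by rewrite lerNl -normrN ler_norm.
have m4 : - `|f (a + 4 * h)| <= f (a + 4 * h) by rewrite lerNl -normrN ler_norm.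
have a1 := normr_ge0 (f (a + h)). have a2 := normr_ge0 (f (a + 2 * h)).
have a3 := normr_ge0 (f (a + 3 * h)). have a4 := normr_ge0 (f (a + 4 * h)).
case: (ltrP (a + 2 * h) s) => hs.
  have := @conc_mid f a b (a + h) (a + 2 * h) s H.
  move=> /(_ ltac:(lra) ltac:(lra) ltac:(lra) ltac:(lra) ltac:(lra)) c.
  nra.
have := @conc_mid f a b s (a + 3 * h) (a + 4 * h) H.
move=> /(_ ltac:(lra) ltac:(lra) ltac:(lra) ltac:(lra) ltac:(lra)) c.
nra.
Qed.

Lemma near_leftE (c : R) (P : R -> Prop) : (\forall y \near c^'-, P y) ->
  exists2 e, 0 < e & forall y, c - e < y < c -> P y.
Proof.
rewrite near_withinE => /nbhs_normP [e /= e0 H].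
exists e => // y /andP[h1 h2]; apply: H => //=.
rewrite ger0_norm; lra.
Qed.

Lemma near_rightE (c : R) (P : R -> Prop) : (\forall y \near c^'+, P y) ->
  exists2 e, 0 < e & forall y, c < y < c + e -> P y.
Proof.
rewrite near_withinE => /nbhs_normP [e /= e0 H].
exists e => // y /andP[h1 h2]; apply: H => //=.
rewrite ler0_norm; lra.
Qed.
End Aux.


Section K.
Variable R : realType.
Implicit Types K : R -> \bar R.

Lemma kfin K : is_kernel K -> forall t, (-1 < t < 0) \/ (0 < t < 1) ->
  K t = (fine (K t))%:E.
Proof. by move=> [[hf _ _] _] t /hf /fineK. Qed.

Lemma conc_lb (f : R -> R) a b al be : concave_on f a b -> a < al -> al < be -> be < b ->
  forall u, al <= u <= be -> Num.min (f al) (f be) <= f u.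
Proof.
move=> H aal albe beb u /andP[h1 h2].
have := @conc_mid R f a b al u be H aal h1 h2 beb albe.
have m1 : Num.min (f al) (f be) <= f al by rewrite ge_min lexx.
have m2 : Num.min (f al) (f be) <= f be by rewrite ge_min lexx orbT.
move: m1 m2; set m := Num.min _ _ => m1 m2. nra.
Qed.

Lemma conc_interior (f : R -> R) a b s : concave_on f a b -> a < s < b ->
  exists L, exists2 eta, 0 < eta & forall u, `|u - s| <= eta -> a < u < b /\ L <= f u.
Proof.
move=> H /andP[h1 h2].
have m0 : 0 < Num.min (s - a) (b - s) by rewrite lt_min !subr_gt0 h1 h2.
have m1 : Num.min (s - a) (b - s) <= s - a by rewrite ge_min lexx.
have m2 : Num.min (s - a) (b - s) <= b - s by rewrite ge_min lexx orbT.
move: m0 m1 m2; set m := Num.min _ _ => m0 m1 m2.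
exists (Num.min (f (s - m / 2)) (f (s + m / 2))), (m / 2); first lra.
move=> u; rewrite ler_norml => /andP[u1 u2]; split; first (apply/andP; split; lra).
apply: (@conc_lb f a b (s - m / 2) (s + m / 2) H); try lra.
Qed.

Lemma kernel_ub K : is_kernel K -> exists C : R, forall s, -1 <= s <= 1 -> (K s <= C%:E)%E.
Proof.
move=> hK; have hfin := @kfin K hK.
case: hK => [[_ c1 c2] [l1 l0m l0p r1]].
have [C1 hC1] := @conc_ub R _ _ _ (ltrN10 R) c1.
have [C2 hC2] := @conc_ub R _ _ _ (@ltr01 R) c2.
pose C := Num.max C1 C2.
have hm : forall t, -1 < t < 0 -> (K t <= C%:E)%E.
  move=> t ht; rewrite hfin; last by left.
  by rewrite lee_fin; apply: le_trans (hC1 _ ht) _; rewrite le_max lexx.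
have hp : forall t, 0 < t < 1 -> (K t <= C%:E)%E.
  move=> t ht; rewrite hfin; last by right.
  by rewrite lee_fin; apply: le_trans (hC2 _ ht) _; rewrite le_max lexx orbT.
exists C => s /andP[s1 s2].
case: (ltrgtP s 0) => hs.
- case: (ltrgtP s (-1)) => hs1; first by exfalso; lra.
    by apply: hm; rewrite hs1 hs.
  rewrite hs1; apply: (cvge_to_le l1); near=> x; apply: hm; apply/andP; split.
    by near: x; exact: nbhs_right_gt.
  by near: x; apply: nbhs_right_lt; lra.
- case: (ltrgtP s 1) => hs1; [ | by exfalso; lra | ].
    by apply: hp; rewrite hs1 hs.
  rewrite hs1; apply: (cvge_to_le r1); near=> x; apply: hp; apply/andP; split.
    by near: x; apply: nbhs_left_gt; lra.
  by near: x; exact: nbhs_left_lt.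
- rewrite hs; apply: (cvge_to_le l0p); near=> x; apply: hp; apply/andP; split.
    by near: x; exact: nbhs_right_gt.
  by near: x; apply: nbhs_right_lt; lra.
Unshelve. all: by end_near.
Qed.

Lemma kernel_lb K : is_kernel K -> forall s, -1 <= s <= 1 -> s != 0 -> K s != -oo%E ->
  exists L : R, exists2 eta : R, 0 < eta &
    forall u, -1 <= u <= 1 -> `|u - s| <= eta -> (L%:E <= K u)%E.
Proof.
move=> hK; have hfin := @kfin K hK.
case: hK => [[_ c1 c2] [l1 l0m l0p r1]].
move=> s /andP[s1 s2] s0 sNy.
have [L hL] : exists L : R, (L%:E < K s)%E.
  move: sNy; case: (K s) => [r _| _ |//].
    by exists (r - 1); rewrite lte_fin; lra.
  by exists 0; rewrite ltry.
case: (ltrgtP s 0) => hs.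
- case: (ltrgtP s (-1)) => hs1; first by exfalso; lra.
    have [L' [eta eta0 H]] := @conc_interior _ _ _ s c1 ltac:(rewrite hs1 hs//).
    exists L', eta => // u _ /H[hu hL']; rewrite hfin; last by left.
    by rewrite lee_fin.
  move: hL; rewrite hs1 => hL.
  have := l1 _ (open_ereal_gt' hL) => /near_rightE [e e0 H].
  exists L, (e / 2); first by rewrite divr_gt0.
  move=> u /andP[u1 u2]; rewrite ler_norml => /andP[u3 u4].
  case: (ltrgtP u (-1)) => hu; first by exfalso; lra.
    by apply/ltW/H; apply/andP; split; lra.
  by rewrite hu; apply/ltW.
- case: (ltrgtP s 1) => hs1; [ | by exfalso; lra | ].
    have [L' [eta eta0 H]] := @conc_interior _ _ _ s c2 ltac:(rewrite hs1 hs//).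
    exists L', eta => // u _ /H[hu hL']; rewrite hfin; last by right.
    by rewrite lee_fin.
  move: hL; rewrite hs1 => hL.
  have := r1 _ (open_ereal_gt' hL) => /near_leftE [e e0 H].
  exists L, (e / 2); first by rewrite divr_gt0.
  move=> u /andP[u1 u2]; rewrite ler_norml => /andP[u3 u4].
  case: (ltrgtP u 1) => hu; [ | by exfalso; lra | ].
    by apply/ltW/H; apply/andP; split; lra.
  by rewrite hu; apply/ltW.
- by move: s0; rewrite hs eqxx.
Qed.

Lemma kernel_pole K : is_singular_kernel K -> forall B : R,
  exists2 rho : R, 0 < rho & forall s, `|s| < rho -> (K s <= B%:E)%E.
Proof.
move=> [[_ [_ l0m l0p _]] K0] B.
rewrite K0 in l0m l0p.
have [e1 e10 H1] := @near_leftE R _ _ (cvgeNy_le l0m B).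
have [e2 e20 H2] := @near_rightE R _ _ (cvgeNy_le l0p B).
exists (Num.min e1 e2); first by rewrite lt_min e10 e20.
move=> s; rewrite lt_min => /andP[h1 h2].
move: h1 h2; rewrite !ltr_norml => /andP[h1 h1'] /andP[h2 h2'].
case: (ltrgtP s 0) => hs.
- by apply: H1; apply/andP; split; lra.
- by apply: H2; apply/andP; split; lra.
- by rewrite hs K0 leNye.
Qed.

End K.


Section Y.
Variable R : realType.
Variable n : nat.
Implicit Types x y : 'I_n -> R.

Lemma yext_S x k (h : (k < n)%N) : yext x k.+1 = x (Ordinal h).
Proof. by rewrite /yext insubT /=. Qed.

Lemma yext_Sn x k : ~~ (k < n)%N -> yext x k.+1 = 1.
Proof. by move=> h; rewrite /yext insubF //; apply/negbTE. Qed.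

Lemma yext_01 x : in_Sbar x -> forall k, 0 <= yext x k <= 1.
Proof.
move=> [h _] [|k]; first by rewrite /= lexx ler01.
case: (ltnP k n) => hk; first by rewrite yext_S.
by rewrite yext_Sn -?leqNgt // ler01 lexx.
Qed.

Lemma yext_close x y d : 0 <= d -> (forall i, `|x i - y i| <= d) ->
  forall k, `|yext x k - yext y k| <= d.
Proof.
move=> d0 h [|k]; first by rewrite /= subrr normr0.
case: (ltnP k n) => hk; first by rewrite !yext_S.
by rewrite !yext_Sn -?leqNgt // subrr normr0.
Qed.

Lemma yext_lo x (j : 'I_n.+1) (i : 'I_n) : in_Sbar x -> (i < j)%N -> x i <= yext x j.
Proof.
move=> [_ hm]; case: j => [[|j] hj] hij; first by rewrite ltn0 in hij.
rewrite (@yext_S x j hj); apply: hm => /=; by rewrite -ltnS.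
Qed.

Lemma yext_hi x (j : 'I_n.+1) (i : 'I_n) : in_Sbar x -> ~~ (i < j)%N ->
  yext x j.+1 <= x i.
Proof.
move=> [_ hm] hij; rewrite -leqNgt in hij.
have hj : (j < n)%N by apply: leq_trans (ltn_ord i).
by rewrite (@yext_S x j hj); apply: hm.
Qed.

Lemma yext_lo_pole (j : 'I_n.+1) : (0 < j)%N -> exists p : 'I_n, forall x, yext x j = x p.
Proof.
case: j => [[|j] hj] // _.
by exists (Ordinal (hj : (j < n)%N)) => x; rewrite yext_S.
Qed.

Lemma yext_hi_pole (j : nat) : (j < n)%N -> exists p : 'I_n, forall x, yext x j.+1 = x p.
Proof. by move=> hj; exists (Ordinal hj) => x; rewrite yext_S. Qed.

End Y.


Theorem lemma3p2 (R : realType) (n : nat) (K : 'I_n -> R -> \bar R)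
  (J : R -> \bar R) (y : 'I_n -> R) (j : 'I_n.+1) :
  (forall i, is_singular_kernel (K i)) ->
  is_field_function n J ->
  in_Sbar y ->
  m_val J K y j <> -oo%E ->
  exists (delta : R) (a b : R),
    [/\ 0 < delta, 0 <= a, a <= b, b <= 1 &
      forall x : 'I_n -> R, in_Sbar x ->
        (forall i, `|x i - y i| <= delta) ->
        [/\ [set t | a <= t <= b] `<=` Iint x j,
            (forall t, a <= t <= b -> forall i, delta <= `|t - x i|) &
            m_val J K x j = ereal_sup (F_val J K x @` [set t | (a <= t <= b)%R])]].
Proof.
move=> hK hJ hy hm.
have [[M hM] _] := hJ.
have hKk : forall i, is_kernel (K i) by move=> i; case: (hK i).
have [t0 ht0 Ft0] : exists2 t0, Iint y j t0 & F_val J K y t0 != -oo%E.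
  case: (pselect (exists2 t0, Iint y j t0 & F_val J K y t0 != -oo%E)) => [h|hne].
    exact: h.
  exfalso; apply: hm; apply/ereal_sup_ninfty => _ [t ht <-] /=.
  by apply/eqP/negPn/negP => hF; apply: hne; exists t.
have hy01 := yext_01 _ _ _ hy.
have t001 : 0 <= t0 <= 1.
  move: ht0 => /andP[h1 h2]; have /andP[a1 _] := hy01 j; have /andP[_ a2] := hy01 j.+1.
  apply/andP; split; lra.
have hJt0 : J t0 \is a fin_num.
  rewrite fin_numE; apply/andP; split.
    by apply/eqP => h; move: Ft0; rewrite /F_val h addNye eqxx.
  by apply/eqP => h; move: (hM t0 t001); rewrite h.
have hKt0 : forall i, K i (t0 - y i) != -oo%E.
  move=> i; apply/eqP => h; move: Ft0; rewrite /F_val.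
  have -> : (\sum_(i0 < n) K i0 (t0 - y i0)%R = -oo)%E.
    by apply/eqP; rewrite esum_eqNy; apply/existsP; exists i; rewrite h eqxx.
  by rewrite addeNy eqxx.
have hne0 : forall i, t0 - y i != 0.
  by move=> i; apply/eqP => h; move: (hKt0 i); rewrite h (hK i).2 eqxx.
have harg : forall x : 'I_n -> R, in_Sbar x -> forall t, 0 <= t <= 1 -> forall i, -1 <= t - x i <= 1.
  move=> x [hx _] t /andP[t1 t2] i; have /andP[x1 x2] := hx i.
  apply/andP; split; lra.
have hL : forall i, exists L : R, exists2 eta : R, 0 < eta &
    forall u, -1 <= u <= 1 -> `|u - (t0 - y i)| <= eta -> (L%:E <= K i u)%E.
  move=> i; apply: kernel_lb; [exact: hKk | exact: (harg y hy t0 t001) | exact: hne0 | exact: hKt0].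
have [Lf hLf] := choice hL.
have hE : forall i, exists eta : R, 0 < eta /\
    forall u, -1 <= u <= 1 -> `|u - (t0 - y i)| <= eta -> ((Lf i)%:E <= K i u)%E.
  by move=> i; have [eta e0 h] := hLf i; exists eta.
have [ef hef] := choice hE.
pose eta0 := \big[Order.min/1]_(i < n) ef i.
have eta0p : 0 < eta0.
  rewrite /eta0; elim/big_ind: _ => //.
    by move=> a b ha hb; rewrite lt_min ha hb.
  by move=> i _; case: (hef i).
have eta0le : forall i, eta0 <= ef i by move=> i; exact: bigmin_le.
clearbody eta0.
pose L0 := fine (J t0) + \sum_(i < n) Lf i.
have hlow : forall x : 'I_n -> R, in_Sbar x -> (forall i, `|x i - y i| <= eta0) ->
    (L0%:E <= F_val J K x t0)%E.
  move=> x hx hxy; rewrite /F_val /L0 EFinD (fineK hJt0) -sumEFin.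
  apply: leeD => //; apply: lee_sum => i _.
  case: (hef i) => _ h; apply: h; first exact: harg.
  have -> : t0 - x i - (t0 - y i) = - (x i - y i) by ring.
  by rewrite normrN; apply: le_trans (hxy i) (eta0le i).
have hU : forall i, exists C : R, forall s, -1 <= s <= 1 -> (K i s <= C%:E)%E.
  by move=> i; apply: kernel_ub; exact: hKk.
have [Cf hCf] := choice hU.
have hpole : forall (p : 'I_n) (Lz : R), exists2 rho : R, 0 < rho &
    forall x : 'I_n -> R, in_Sbar x -> forall t, 0 <= t <= 1 -> `|t - x p| < rho ->
    (F_val J K x t <= Lz%:E)%E.
  move=> p Lz.
  pose CS := \sum_(i < n | i != p) Cf i.
  have [rho rho0 hrho] := kernel_pole _ _ (hK p) (Lz - M - CS).
  exists rho => // x hx t ht htp.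
  rewrite /F_val (bigD1 p) //=.
  apply: (@le_trans _ _ (M%:E + ((Lz - M - CS)%:E + \sum_(i < n | i != p) (Cf i)%:E))%E).
    apply: leeD; first exact: hM.
    apply: leeD; first exact: hrho.
    by apply: lee_sum => i _; apply: hCf; exact: harg.
  by rewrite sumEFin -!EFinD lee_fin -/CS; lra.
move: ht0 => /andP[ht0l ht0h].
have g1p : (0 < j)%N -> yext y j < t0.
  move=> hj; have [p hp] := yext_lo_pole R _ _ hj.
  rewrite lt_neqAle ht0l andbT hp; apply/eqP => h.
  by move: (hne0 p); rewrite -h subrr eqxx.
have g2p : (j < n)%N -> t0 < yext y j.+1.
  move=> hj; have [p hp] := yext_hi_pole R _ _ hj.
  rewrite lt_neqAle ht0h andbT hp; apply/eqP => h.
  by move: (hne0 p); rewrite h subrr eqxx.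
have [rhoL rhoL0 hrhoL] : exists2 rho : R, 0 < rho & (0 < j)%N ->
    forall x : 'I_n -> R, in_Sbar x -> forall t, 0 <= t <= 1 -> `|t - yext x j| < rho ->
    (F_val J K x t <= (L0 - 1)%:E)%E.
  case: (ltnP 0 j) => hj.
    have [p hp] := yext_lo_pole R _ _ hj; have [rho r0 hr] := hpole p (L0 - 1).
    exists rho => // _ x hx t ht; rewrite hp; exact: (hr x hx t ht).
  by exists 1 => // hj'; rewrite ltnNge hj in hj'.
have [rhoR rhoR0 hrhoR] : exists2 rho : R, 0 < rho & (j < n)%N ->
    forall x : 'I_n -> R, in_Sbar x -> forall t, 0 <= t <= 1 -> `|t - yext x j.+1| < rho ->
    (F_val J K x t <= (L0 - 1)%:E)%E.
  case: (ltnP j n) => hj.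
    have [p hp] := yext_hi_pole R _ _ hj; have [rho r0 hr] := hpole p (L0 - 1).
    exists rho => // _ x hx t ht; rewrite hp; exact: (hr x hx t ht).
  by exists 1 => // hj'; rewrite ltnNge hj in hj'.
pose g1 := if (0 < j)%N then t0 - yext y j else 1.
pose g2 := if (j < n)%N then yext y j.+1 - t0 else 1.
have g1pos : 0 < g1 by rewrite /g1; case: ifP => h //; rewrite subr_gt0; exact: g1p.
have g2pos : 0 < g2 by rewrite /g2; case: ifP => h //; rewrite subr_gt0; exact: g2p.
have [d d0 [d1 d2 d3 d4 d5]] : exists2 d : R, 0 < d &
    [/\ d <= eta0, d <= rhoL / 4, d <= rhoR / 4, d <= g1 / 3 & d <= g2 / 3].
  exists (Num.min eta0 (Num.min (rhoL / 4) (Num.min (rhoR / 4) (Num.min (g1 / 3) (g2 / 3))))).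
    by rewrite !lt_min eta0p !divr_gt0.
  by split; rewrite !ge_min ?lexx ?orbT.
have [lo0 lo1] : 0 <= yext y j /\ yext y j <= 1 by apply/andP; exact: hy01.
have [hi0 hi1] : 0 <= yext y j.+1 /\ yext y j.+1 <= 1 by apply/andP; exact: hy01.
have j0E : ~~ (0 < j)%N -> nat_of_ord j = 0%N by rewrite -leqNgt leqn0 => /eqP.
pose a := if (0 < j)%N then yext y j + 3 * d else 0.
pose b := if (j < n)%N then yext y j.+1 - 3 * d else 1.
have at0 : a <= t0.
  rewrite /a; case: ifP => h; last by case/andP: t001.
  by move: d4; rewrite /g1 h => ?; lra.
have t0b : t0 <= b.
  rewrite /b; case: ifP => h; last by case/andP: t001.
  by move: d5; rewrite /g2 h => ?; lra.
exists d, a, b; split => //.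
- by rewrite /a; case: ifP => _ //; lra.
- exact: le_trans at0 t0b.
- by rewrite /b; case: ifP => _ //; lra.
move=> x hx hxy.
have hx01 := yext_01 _ _ _ hx.
have hclo := yext_close _ _ _ _ _ (ltW d0) hxy j.
have hchi := yext_close _ _ _ _ _ (ltW d0) hxy j.+1.
move: hclo hchi; rewrite !ler_norml => /andP[c1 c2] /andP[c3 c4].
have Wa : yext x j <= a.
  rewrite /a; case: ifP => h; first lra.
  by rewrite j0E ?h.
have Wb : b <= yext x j.+1.
  rewrite /b; case: ifP => h; first lra.
  by rewrite yext_Sn ?h.
have Wsub : [set t | a <= t <= b] `<=` Iint x j.
  move=> t /andP[ta tb]; apply/andP; split; lra.
split => //.
- move=> t /andP[ta tb] i.
  case: (boolP (i < j)%N) => hij.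
    have hj : (0 < j)%N by apply: leq_ltn_trans (leq0n i) hij.
    have := yext_lo _ _ _ _ _ hx hij; move: ta; rewrite /a hj => ta hxi.
    by apply: le_trans (ler_norm _); lra.
  have hj : (j < n)%N.
    by apply: leq_ltn_trans (ltn_ord i); rewrite leqNgt.
  have := yext_hi _ _ _ _ _ hx hij; move: tb; rewrite /b hj => tb hxi.
  by rewrite distrC; apply: le_trans (ler_norm _); lra.
have t0W : [set t | a <= t <= b] t0 by rewrite /= at0 t0b.
have hL0 : (L0%:E <= F_val J K x t0)%E.
  by apply: hlow => // i; apply: le_trans (hxy i) d1.
have hsup0 : (F_val J K x t0 <= ereal_sup (F_val J K x @` [set t | (a <= t <= b)%R]))%E.
  by apply: ereal_sup_ubound; exists t0.
have hfin : forall t, (F_val J K x t <= (L0 - 1)%:E)%E ->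
    (F_val J K x t <= ereal_sup (F_val J K x @` [set t | (a <= t <= b)%R]))%E.
  move=> t ht; apply: le_trans ht _; apply: le_trans hsup0.
  by apply: le_trans hL0; rewrite lee_fin; lra.
apply/eqP; rewrite eq_le; apply/andP; split; last first.
  by apply: ereal_sup_le; apply: image_subset.
apply: ge_ereal_sup => _ [t ht <-].
move: ht => /andP[tl tr].
have t01 : 0 <= t <= 1.
  have /andP[? _] := hx01 j; have /andP[_ ?] := hx01 j.+1.
  apply/andP; split; lra.
case: (ltrP t a) => hta.
  case: (ltnP 0 j) => hj; last first.
    by exfalso; move: hta tl; rewrite /a ltnNge hj /= j0E ?ltnNge ?hj //=; lra.
  apply: hfin; apply: hrhoL => //.
  move: hta; rewrite /a hj => hta.
  rewrite ger0_norm; [lra | rewrite subr_ge0 //].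
case: (ltrP b t) => htb.
  case: (ltnP j n) => hj; last first.
    exfalso; move: htb tr; rewrite yext_Sn; last by rewrite -leqNgt. rewrite /b ltnNge hj /=; lra.
  apply: hfin; apply: hrhoR => //.
  move: htb; rewrite /b hj => htb.
  rewrite distrC ger0_norm; [lra | rewrite subr_ge0 //].
by apply: ereal_sup_ubound; exists t => //=; rewrite hta htb.
Qed.
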